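(* Let $(A,\cdot)$ be a commutative associative algebra, $\circ:A\otimes A\to A$ a bilinear operation, and define $x\star y=x\circ y-2y\circ x$. Then the identities $$2(x\circ y)\cdot z-2(y\circ x)\cdot z=y\cdot(x\circ z)-x\cdot(y\circ z),\qquad 2x\circ(y\cdot z)=(z\cdot x)\circ y+z\cdot(x\circ y)\quad(\forall x,y,z\in A)$$ hold if and only if the identities $$(x\cdot y)\star z=x\cdot(y\star z),\qquad (x\star y)\cdot z-(y\star x)\cdot z=x\star(y\cdot z)-y\star(x\cdot z)\quad(\forall x,y,z\in A)$$ hold. In particular, $(A,\cdot,\circ)$ is an admissible Novikov-Poisson algebra if and only if $(A,\cdot,\star)$ is a Novikov-Poisson algebra.
   Context: All vector spaces are finite-dimensional over a field $\mathbb F$ of characteristic $0$. For a bilinear operation $\circ$ write $[x,y]=x\circ y-y\circ x$. An anti-pre-Lie algebra is $(A,\circ)$ with $x\circ(y\circ z)-y\circ(x\circ z)=[y,x]\circ z$ and $[x,y]\circ z+[y,z]\circ x+[z,x]\circ y=0$; an admissible Novikov algebra is $(A,\circ)$ with $x\circ(y\circ z)-y\circ(x\circ z)=[y,x]\circ z$ and $2x\circ[y,z]=(x\circ y)\circ z-(x\circ z)\circ y$ (it is automatically anti-pre-Lie). An anti-pre-Lie Poisson algebra is $(A,\cdot,\circ)$ with $(A,\cdot)$ commutative associative, $(A,\circ)$ anti-pre-Lie, satisfying the first pair of identities in the claim; it is an admissible Novikov-Poisson algebra if moreover $(A,\circ)$ is admissible Novikov. A Novikov algebra is $(A,\star)$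 with $(x\star y)\star z-x\star(y\star z)=(y\star x)\star z-y\star(x\star z)$ and $(x\star y)\star z=(x\star z)\star y$. A Novikov-Poisson algebra is $(A,\cdot,\star)$ with $(A,\cdot)$ commutative associative, $(A,\star)$ Novikov, satisfying the second pair of identities in the claim. *)

(* Defs.v *)
From HB Require Import structures.
From mathcomp Require Import all_boot all_algebra.
Set Implicit Arguments. Unset Strict Implicit. Unset Printing Implicit Defensive.
Import GRing.Theory.
Local Open Scope ring_scope.

Section Defs.
Variables (F : fieldType) (A : lmodType F).

Definition bilinear_op (op : A -> A -> A) : Prop :=
  (forall (a : F) (x y z : A), op (a *: x + y) z = a *: op x z + op y z) /\
  (forall (a : F) (x y z : A), op z (a *: x + y) = a *: op z x + op z y).

Definition commutator (op : A -> A -> A) (x y : A) : A := op x y - op y x.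

Definition comm_assoc_alg (dot : A -> A -> A) : Prop :=
  bilinear_op dot /\ commutative dot /\ associative dot.

Definition anti_pre_Lie (op : A -> A -> A) : Prop :=
  bilinear_op op /\
  (forall x y z, op x (op y z) - op y (op x z) = op (commutator op y x) z) /\
  (forall x y z, op (commutator op x y) z + op (commutator op y z) x
                 + op (commutator op z x) y = 0).

Definition admissible_Novikov (op : A -> A -> A) : Prop :=
  bilinear_op op /\
  (forall x y z, op x (op y z) - op y (op x z) = op (commutator op y x) z) /\
  (forall x y z, 2%:R *: op x (commutator op y z) = op (op x y) z - op (op x z) y).

Definition Novikov (op : A -> A -> A) : Prop :=
  bilinear_op op /\
  (forall x y z, op (op x y) z - op x (op y z) = op (op y x) z - op y (op x z)) /\
  (forall x y z, op (op x y) z = op (op x z) y).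

Definition APLP_identities (dot circ : A -> A -> A) : Prop :=
  (forall x y z, 2%:R *: dot (circ x y) z - 2%:R *: dot (circ y x) z
                 = dot y (circ x z) - dot x (circ y z)) /\
  (forall x y z, 2%:R *: circ x (dot y z) = circ (dot z x) y + dot z (circ x y)).

Definition NP_identities (dot star : A -> A -> A) : Prop :=
  (forall x y z, star (dot x y) z = dot x (star y z)) /\
  (forall x y z, dot (star x y) z - dot (star y x) z
                 = star x (dot y z) - star y (dot x z)).

Definition anti_pre_Lie_Poisson (dot circ : A -> A -> A) : Prop :=
  comm_assoc_alg dot /\ anti_pre_Lie circ /\ APLP_identities dot circ.

Definition admissible_Novikov_Poisson (dot circ : A -> A -> A) : Prop :=
  anti_pre_Lie_Poisson dot circ /\ admissible_Novikov circ.

Definition Novikov_Poisson (dot star : A -> A -> A) : Prop :=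
  comm_assoc_alg dot /\ Novikov star /\ NP_identities dot star.

End Defs.

(* Main.v *)
Require Import Defs.
From HB Require Import structures.
From mathcomp Require Import all_boot all_algebra.
From mathcomp Require Import ring.
Import GRing.Theory.
Local Open Scope ring_scope.

Lemma coord_ext (F : fieldType) (A : vectType F) (u v : A) :
  (forall i, coord (vbasis fullv) i u = coord (vbasis fullv) i v) -> u = v.
Proof.
move=> h; rewrite (coord_vbasis (memvf u)) (coord_vbasis (memvf v)).
by apply: eq_bigr => i _; rewrite h.
Qed.

Lemma comb_start (F : fieldType) (g h : F) : g - h = 0 -> g = h.
Proof. by move/eqP; rewrite subr_eq0 => /eqP. Qed.

Lemma comb_step (F : fieldType) (g e c : F) : e = 0 -> g - c * e = 0 -> g = 0.
Proof. by move=> ->; rewrite mulr0 subr0. Qed.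

Section Bil.
Context {F : fieldType} {A : lmodType F} {op : A -> A -> A} (H : bilinear_op op).

Lemma b0l w : op 0 w = 0.
Proof.
have := H.1 1 0 0 w; rewrite !scale1r addr0 => h.
by have := congr1 (fun t => t - op 0 w) h; rewrite addrK subrr => e; rewrite -e.
Qed.
Lemma b0r w : op w 0 = 0.
Proof.
have := H.2 1 0 0 w; rewrite !scale1r addr0 => h.
by have := congr1 (fun t => t - op w 0) h; rewrite addrK subrr => e; rewrite -e.
Qed.
Lemma bDl u v w : op (u + v) w = op u w + op v w.
Proof. by have := H.1 1 u v w; rewrite !scale1r. Qed.
Lemma bDr u v w : op w (u + v) = op w u + op w v.
Proof. by have := H.2 1 u v w; rewrite !scale1r. Qed.
Lemma bZl a u w : op (a *: u) w = a *: op u w.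
Proof. by have := H.1 a u 0 w; rewrite !addr0 b0l addr0. Qed.
Lemma bZr a u w : op w (a *: u) = a *: op w u.
Proof. by have := H.2 a u 0 w; rewrite !addr0 b0r addr0. Qed.
Lemma bNl u w : op (- u) w = - op u w.
Proof. by rewrite -scaleN1r bZl scaleN1r. Qed.
Lemma bNr u w : op w (- u) = - op w u.
Proof. by rewrite -scaleN1r bZr scaleN1r. Qed.
Lemma bBl u v w : op (u - v) w = op u w - op v w.
Proof. by rewrite bDl bNl. Qed.
Lemma bBr u v w : op w (u - v) = op w u - op w v.
Proof. by rewrite bDr bNr. Qed.
End Bil.

Section Main.
Variables (F : fieldType) (A : vectType F) (charF0 : [pchar F] =i pred0)
  (dot circ : A -> A -> A)
  (Hdot : comm_assoc_alg dot) (Hcirc : bilinear_op circ).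

Let Hd := Hdot.1.
Let Hc : commutative dot := Hdot.2.1.
Lemma dC a b c : dot (circ a b) c = dot c (circ a b).
Proof. exact: Hc. Qed.

Lemma nzF n : (n.+1%:R : F) != 0.
Proof. by have /pcharf0P -> := charF0. Qed.

Ltac use c h := match type of h with ?a = ?b =>
  apply: (@comb_step F _ (a - b) c); [by rewrite h subrr|] end.

Ltac ex := rewrite ?(bBl Hcirc, bBr Hcirc, bDl Hcirc, bDr Hcirc, bZl Hcirc,
  bZr Hcirc, bNl Hcirc, bNr Hcirc, bBl Hd, bBr Hd, bDl Hd, bDr Hd, bZl Hd,
  bZr Hd, bNl Hd, bNr Hd).
Ltac lin := rewrite ?(linearB, linearD, linearZ, linearN) /=.
Ltac norm := rewrite /commutator /=; ex; rewrite ?dC.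
Ltac fin := field; rewrite ?(nzF 1) ?(nzF 2) ?(nzF 8) //.

Let star := fun x y : A => circ x y - 2%:R *: circ y x.

Lemma part1 : APLP_identities dot circ <-> NP_identities dot star.
Proof.
split.
- case=> I1 I2; split => x y z; rewrite /star /=.
  + apply: coord_ext => i.
  move: (congr1 (coord (vbasis fullv) i) (I1 y z x)) (congr1 (coord (vbasis fullv) i) (I2 y x z)) (congr1 (coord (vbasis fullv) i) (I2 y z x)) (congr1 (coord (vbasis fullv) i) (I2 z x y)).
  norm; rewrite ?(Hc y x) ?(Hc z x) ?(Hc z y); lin. move=> h0 h1 h2 h3.
  apply: (@comb_start F). use (- 1%:R : F) h0. use (1%:R : F) h1. use (- 1%:R : F) h2. use (- 1%:R : F) h3.
  fin.
  + apply: coord_ext => i.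
  move: (congr1 (coord (vbasis fullv) i) (I1 x y z)) (congr1 (coord (vbasis fullv) i) (I2 x y z)) (congr1 (coord (vbasis fullv) i) (I2 x z y)) (congr1 (coord (vbasis fullv) i) (I2 y x z)) (congr1 (coord (vbasis fullv) i) (I2 y z x)).
  norm; rewrite ?(Hc y x) ?(Hc z x) ?(Hc z y); lin. move=> h0 h1 h2 h3 h4.
  apply: (@comb_start F). use ((5%:R / 2%:R) : F) h0. use (2%:R : F) h1. use (- (5%:R / 2%:R) : F) h2. use (- 2%:R : F) h3. use ((5%:R / 2%:R) : F) h4.
  fin.
- case=> N1 N2; rewrite /star /= in N1 N2; split => x y z.
  + apply: coord_ext => i.
  move: (congr1 (coord (vbasis fullv) i) (N1 x y z)) (congr1 (coord (vbasis fullv) i) (N1 x z y)) (congr1 (coord (vbasis fullv) i) (N1 y x z)) (congr1 (coord (vbasis fullv) i) (N1 y z x)) (congr1 (coord (vbasis fullv) i) (N1 z x y)) (congr1 (coord (vbasis fullv) i) (N1 z y x)).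
  norm; rewrite ?(Hc y x) ?(Hc z x) ?(Hc z y); lin. move=> h0 h1 h2 h3 h4 h5.
  apply: (@comb_start F). use ((1%:R / 3%:R) : F) h0. use ((2%:R / 3%:R) : F) h1. use (- (1%:R / 3%:R) : F) h2. use (- (2%:R / 3%:R) : F) h3. use (- (2%:R / 3%:R) : F) h4. use ((2%:R / 3%:R) : F) h5.
  fin.
  + apply: coord_ext => i.
  move: (congr1 (coord (vbasis fullv) i) (N1 z x y)) (congr1 (coord (vbasis fullv) i) (N1 z y x)) (congr1 (coord (vbasis fullv) i) (N2 x y z)).
  norm; rewrite ?(Hc y x) ?(Hc z x) ?(Hc z y); lin. move=> h0 h1 h2.
  apply: (@comb_start F). use ((1%:R / 3%:R) : F) h0. use (- (4%:R / 3%:R) : F) h1. use ((2%:R / 3%:R) : F) h2.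
  fin.
Qed.

Lemma star_bil : bilinear_op star.
Proof.
split=> a x y z; rewrite /star /=; apply: coord_ext => i; norm; lin; ring.
Qed.

Lemma fwd2 :
  (forall x y z, circ x (circ y z) - circ y (circ x z) = circ (commutator circ y x) z) ->
  (forall x y z, 2%:R *: circ x (commutator circ y z) = circ (circ x y) z - circ (circ x z) y) ->
  Novikov star.
Proof.
move=> P1 P2; split; first exact: star_bil.
split=> x y z; rewrite /star /=.
- apply: coord_ext => i.
  move: (congr1 (coord (vbasis fullv) i) (P1 x y z)) (congr1 (coord (vbasis fullv) i) (P1 x z y)) (congr1 (coord (vbasis fullv) i) (P1 y z x)) (congr1 (coord (vbasis fullv) i) (P2 x y z)) (congr1 (coord (vbasis fullv) i) (P2 y x z)) (congr1 (coord (vbasis fullv) i) (P2 z x y)).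
  norm; rewrite ?(Hc y x) ?(Hc z x) ?(Hc z y); lin. move=> h0 h1 h2 h3 h4 h5.
  apply: (@comb_start F). use ((5%:R / 3%:R) : F) h0. use (- (2%:R / 3%:R) : F) h1. use ((2%:R / 3%:R) : F) h2. use (- (4%:R / 3%:R) : F) h3. use ((4%:R / 3%:R) : F) h4. use (- (10%:R / 3%:R) : F) h5.
  fin.
- apply: coord_ext => i.
  move: (congr1 (coord (vbasis fullv) i) (P1 x y z)) (congr1 (coord (vbasis fullv) i) (P1 x z y)) (congr1 (coord (vbasis fullv) i) (P1 y z x)) (congr1 (coord (vbasis fullv) i) (P2 x y z)) (congr1 (coord (vbasis fullv) i) (P2 y x z)) (congr1 (coord (vbasis fullv) i) (P2 z x y)).
  norm; rewrite ?(Hc y x) ?(Hc z x) ?(Hc z y); lin. move=> h0 h1 h2 h3 h4 h5.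
  apply: (@comb_start F). use ((2%:R / 3%:R) : F) h0. use (- (2%:R / 3%:R) : F) h1. use (- (4%:R / 3%:R) : F) h2. use (- (1%:R / 3%:R) : F) h3. use ((4%:R / 3%:R) : F) h4. use (- (4%:R / 3%:R) : F) h5.
  fin.
Qed.

Lemma bwd2 : Novikov star ->
  (forall x y z, circ x (circ y z) - circ y (circ x z) = circ (commutator circ y x) z) /\
  (forall x y z, circ (commutator circ x y) z + circ (commutator circ y z) x
                 + circ (commutator circ z x) y = 0) /\
  (forall x y z, 2%:R *: circ x (commutator circ y z) = circ (circ x y) z - circ (circ x z) y).
Proof.
case=> _ [V1 V2]; rewrite /star /= in V1 V2.
split; [|split] => x y z.
- apply: coord_ext => i.
  move: (congr1 (coord (vbasis fullv) i) (V1 x y z)) (congr1 (coord (vbasis fullv) i) (V1 x z y)) (congr1 (coord (vbasis fullv) i) (V1 y z x)) (congr1 (coord (vbasis fullv) i) (V2 z x y)).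
  norm; rewrite ?(Hc y x) ?(Hc z x) ?(Hc z y); lin. move=> h0 h1 h2 h3.
  apply: (@comb_start F). use (- (1%:R / 9%:R) : F) h0. use (- (2%:R / 9%:R) : F) h1. use ((2%:R / 9%:R) : F) h2. use (- (2%:R / 3%:R) : F) h3.
  fin.
- apply: coord_ext => i.
  move: (congr1 (coord (vbasis fullv) i) (V1 x y z)) (congr1 (coord (vbasis fullv) i) (V1 x z y)) (congr1 (coord (vbasis fullv) i) (V1 y z x)) (congr1 (coord (vbasis fullv) i) (V2 x y z)) (congr1 (coord (vbasis fullv) i) (V2 y x z)) (congr1 (coord (vbasis fullv) i) (V2 z x y)).
  norm; rewrite ?(Hc y x) ?(Hc z x) ?(Hc z y); lin. move=> h0 h1 h2 h3 h4 h5.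
  apply: (@comb_start F). use ((2%:R / 9%:R) : F) h0. use (- (2%:R / 9%:R) : F) h1. use ((2%:R / 9%:R) : F) h2. use (- (1%:R / 3%:R) : F) h3. use ((1%:R / 3%:R) : F) h4. use (- (1%:R / 3%:R) : F) h5.
  fin.
- apply: coord_ext => i.
  move: (congr1 (coord (vbasis fullv) i) (V1 x y z)) (congr1 (coord (vbasis fullv) i) (V1 x z y)) (congr1 (coord (vbasis fullv) i) (V1 y z x)) (congr1 (coord (vbasis fullv) i) (V2 x y z)).
  norm; rewrite ?(Hc y x) ?(Hc z x) ?(Hc z y); lin. move=> h0 h1 h2 h3.
  apply: (@comb_start F). use ((2%:R / 9%:R) : F) h0. use (- (2%:R / 9%:R) : F) h1. use (- (4%:R / 9%:R) : F) h2. use (- (1%:R / 3%:R) : F) h3.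
  fin.
Qed.

End Main.

Theorem proposition3p39 (F : fieldType) (A : vectType F)
  (charF0 : [pchar F] =i pred0)
  (dot circ : A -> A -> A)
  (Hdot : comm_assoc_alg dot) (Hcirc : bilinear_op circ) :
  let star := fun x y : A => circ x y - 2%:R *: circ y x in
  (APLP_identities dot circ <-> NP_identities dot star) /\
  (admissible_Novikov_Poisson dot circ <-> Novikov_Poisson dot star).
Proof.
move=> star.
have P1 : APLP_identities dot circ <-> NP_identities dot star
  := @part1 F A charF0 dot circ Hdot.
split=> //; split.
- case=> [[_ [[_ [A1 _]] AP]] [_ [_ AN]]].
  split=> //; split; first exact: (@fwd2 F A charF0 circ Hcirc A1 AN).
  by apply/P1.
- case=> [_ [NV NP]].
  have [A1 [A2 AN]] := @bwd2 F A charF0 circ Hcirc NV.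
  split; last by split=> //; split.
  split=> //; split; last by apply/P1.
  by split=> //; split.
Qed.
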